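(* Let $G$ be a finite graph with edge set $E$, and let $P$ be a set of unordered pairs $\{e_1,e_2\}$ of distinct edges of $G$. Then there exist an integer $r$ with $0\le r\le |P|$, a set $F=\{f_1,\dots,f_r\}$ of new labels disjoint from $E$, and a real matrix $A$ with columns labelled by $E\cup F$ such that: (i) after a permutation of columns, $A$ has the block form $$A=\begin{pmatrix} I_{\mathrm{rk}\, G} & 0 & C \\ 0 & I_{r} & D \end{pmatrix},$$ where $\mathrm{rk}\, G$ is the rank of the cycle matroid of $G$ (number of vertices minus number of connected components), the columns of the middle block are those labelled by $F$, and every entry of $C$ and $D$ lies in $\{0,1,-1\}$; (ii) the matrix $(I_{\mathrm{rk}\, G}\,|\,C)$, with its columns labelled by $E$, represents the cycle matroid of $G$ over $\mathbb{R}$ (so the matroid represented by $A$ is a coextension of the cycle matroid of $G$, i.e. contracting $F$ in it gives the cycle matroid of $G$); (iii) for every pair $\{e_1,e_2\}\in P$ there exist a column label $g\in E\cup F$ and nonzero real numbers $\alpha,\beta$ such that every vector $x\in\mathbb{R}^{E\cup F}$ with $Ax=0$ satisfies $x_g=\alpha x_{e_1}+\beta x_{e_2}$ (that is, the ''momentum'' of $g$ is a linear combination with both weights nonzero of the momenta of $e_1$ and $e_2$).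
   Context: A matroid on a finite set $E$ is given by its set of circuits. A real matrix with columns labelled by $E$ represents the matroid whose circuits are the minimal linearly dependent sets of columns. The cycle matroid of a graph $G$ has ground set the edge set and circuits the cycles of $G$; it is represented by the (directed) incidence matrix of $G$. A matroid $M$ on $E\cup F$ is a coextension of a matroid $N$ on $E$ if $N$ is obtained from $M$ by contracting $F$. Physically, the kernel of the representing matrix parametrizes assignments of momenta to edges satisfying momentum conservation (rows = momentum-conserving sets), and the set $P$ records pairs of edges whose momenta appear dotted together in the numerator of a Feynman integral; each new element of $F$ corresponds to an extra propagator whose momentum is a linear combination of the momenta of a pair in $P$. *)

(* Defs.v *)
From HB Require Import structures.
From mathcomp Require Import all_boot all_order all_algebra.
From mathcomp Require Import reals.
Set Implicit Arguments. Unset Strict Implicit. Unset Printing Implicit Defensive.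
Import Order.TTheory GRing.Theory Num.Theory.
Local Open Scope ring_scope.

(* A finite (multi)graph: vertices V, edges E, each edge e has endpoints
   ends e = (tail, head) (an arbitrary orientation; loops allowed). *)

Definition subadj (V E : finType) (ends : E -> V * V) (C : {set E}) : rel V :=
  fun u v => [exists e in C, (ends e == (u, v)) || (ends e == (v, u))].

Definition gadj (V E : finType) (ends : E -> V * V) : rel V :=
  subadj ends [set: E].

Definition graph_rank (V E : finType) (ends : E -> V * V) : nat :=
  (#|V| - n_comp (gadj ends) predT)%N.

Definition sdeg (V E : finType) (ends : E -> V * V) (C : {set E}) (v : V) : nat :=
  (#|[set e in C | (ends e).1 == v]| + #|[set e in C | (ends e).2 == v]|)%N.

Definition is_cycle (V E : finType) (ends : E -> V * V) (C : {set E}) : Prop :=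
  C != set0 /\
  (forall v, sdeg ends C v = 0%N \/ sdeg ends C v = 2%N) /\
  (forall u v, sdeg ends C u != 0%N -> sdeg ends C v != 0%N ->
     connect (subadj ends C) u v).

Definition col_dependent (R : realType) (I L : finType) (A : I -> L -> R)
  (S : {set L}) : Prop :=
  exists x : L -> R,
    (forall l, l \notin S -> x l = 0) /\ (exists l, x l != 0) /\
    (forall i, \sum_(l : L) A i l * x l = 0).

Definition col_circuit (R : realType) (I L : finType) (A : I -> L -> R)
  (S : {set L}) : Prop :=
  col_dependent A S /\ (forall T : {set L}, T \proper S -> ~ col_dependent A T).

Definition represents_cycle_matroid (R : realType) (V E I : finType)
  (ends : E -> V * V) (A : I -> E -> R) : Prop :=
  forall S : {set E}, col_circuit A S <-> is_cycle ends S.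

Definition in_kernel (R : realType) (I L : finType) (A : I -> L -> R)
  (x : L -> R) : Prop :=
  forall i, \sum_(l : L) A i l * x l = 0.

(* Main.v *)
Require Import Defs.
From HB Require Import structures.
From mathcomp Require Import all_boot all_order all_algebra.
From mathcomp Require Import reals.
From mathcomp Require Import boolp.
From Stdlib Require Import Lia.
From mathcomp Require Import zify.
From mathcomp Require Import ring.
Set Implicit Arguments. Unset Strict Implicit. Unset Printing Implicit Defensive.
Import Order.TTheory GRing.Theory Num.Theory.
Local Open Scope ring_scope.
Lemma DL1set (R : realType) (I L : finType) (M : I -> L -> R)
  (Is : {set I}) (Ls : {set L}) : (#|Is| < #|Ls|)%N ->
  exists x : L -> R, (forall l, l \notin Ls -> x l = 0) /\ (exists l, x l != 0) /\
    (forall i, i \in Is -> \sum_l M i l * x l = 0).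
Proof.
move=> hlt.
pose Mt : 'M[R]_(#|Ls|, #|Is|) := \matrix_(k, j) M (enum_val j) (enum_val k).
pose K := kermx Mt.
have rK : (0 < \rank K)%N.
  rewrite mxrank_ker; have := rank_leq_col Mt; lia.
have [k hk] : exists k, row k K != 0.
  apply/existsP; apply: contraLR rK; rewrite negb_exists => /forallP H.
  suff -> : K = 0 by rewrite mxrank0.
  apply/matrixP => a b; have /negPn/eqP/matrixP/(_ 0 b) := H a.
  by rewrite !mxE.
set u := row k K in hk.
have uM : u *m Mt = 0 by apply/sub_kermxP; exact: row_sub.
pose x l := \sum_(k0 < #|Ls|) (enum_val k0 == l)%:R * u 0 k0.
have xev : forall k0, x (enum_val k0) = u 0 k0.
  move=> k0; rewrite /x (bigD1 k0) //= eqxx mul1r big1 ?addr0 // => k1 hk1.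
  by rewrite (inj_eq enum_val_inj) (negbTE hk1) mul0r.
exists x; split; [|split].
- move=> l hl; rewrite /x big1 // => k0 _.
  have : enum_val k0 \in Ls := enum_valP k0.
  by case: eqP => [-> |]; [rewrite (negbTE hl)|rewrite mul0r].
- have [k0 hk0] : exists k0, u 0 k0 != 0.
    apply/existsP; apply: contraR hk; rewrite negb_exists => /forallP H.
    apply/eqP/matrixP => a b; rewrite ord1 !mxE; have := H b; rewrite negbK !mxE => /eqP //.
  by exists (enum_val k0); rewrite xev.
- move=> i hi.
  have h : (u *m Mt) 0 (enum_rank_in hi i) = 0 by rewrite uM mxE.
  rewrite -[RHS]h !mxE /Mt; under [in RHS]eq_bigr => j _ do rewrite mxE.
  rewrite /x; under [in LHS]eq_bigr => l _ do rewrite mulr_sumr.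
  rewrite exchange_big /=; apply: eq_bigr => k0 _.


  rewrite [X in _ = _ * X]mxE enum_rankK_in // /u mxE (bigD1 (enum_val k0)) //= eqxx mul1r big1 ?addr0.
    by rewrite mulrC.
  by move=> l hl; rewrite eq_sym (negbTE hl) mul0r mulr0.
Qed.
Lemma conn_ind (T : finType) (r : rel T) (P : T -> Prop) u :
  P u -> (forall a b, P a -> r a b -> P b) -> forall w, connect r u w -> P w.
Proof.
move=> Pu Hst w /connectP [p]; elim: p u Pu => [|a p IH] u Pu /=.
  by move=> _ ->.
by move=> /andP [ra pa] hw; exact: (IH a (Hst _ _ Pu ra) pa hw).
Qed.

Section G.
Variables (R : realType) (V E : finType) (ends : E -> V * V).

Definition Nm (v : V) (e : E) : R := (v == (ends e).2)%:R - (v == (ends e).1)%:R.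
Definition circ (x : E -> R) := forall v, \sum_e Nm v e * x e = 0.
Definition inc (v : V) (e : E) := ((ends e).1 == v) || ((ends e).2 == v).
Definition loopfree (C : {set E}) := forall e, e \in C -> (ends e).1 != (ends e).2.

Lemma sum_delta (T : finType) (a : T) (f : T -> R) : \sum_v (v == a)%:R * f v = f a.
Proof.
rewrite (bigD1 a) //= eqxx mul1r big1 ?addr0 // => v hv.
by rewrite (negbTE hv) mul0r.
Qed.

Lemma sum_delta_in (S : {set V}) a : \sum_(v in S) (v == a)%:R = (a \in S)%:R :> R.
Proof.
case: (boolP (a \in S)) => ha.
  rewrite (bigD1 a) //= eqxx big1 ?addr0 // => v /andP [_ hv].
  by rewrite (negbTE hv).
rewrite big1 // => v hv; by case: eqP => // ev; move: hv; rewrite ev (negbTE ha).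
Qed.

Lemma sumN_in (S : {set V}) e :
  \sum_(v in S) Nm v e = (((ends e).2 \in S)%:R - ((ends e).1 \in S)%:R).
Proof. by rewrite sumrB !sum_delta_in. Qed.

Lemma Nm_colsum e : \sum_v Nm v e = 0.
Proof.
have := sumN_in setT e; rewrite !inE subrr => h; rewrite -[RHS]h.
by apply: eq_bigl => v; rewrite inE.
Qed.

Lemma yN (y : V -> R) e : \sum_v y v * Nm v e = y (ends e).2 - y (ends e).1.
Proof.
rewrite /Nm; under eq_bigr => v _ do rewrite mulrBr.
by rewrite sumrB; congr (_ - _); rewrite -(sum_delta _ y); apply: eq_bigr => v _; rewrite mulrC.
Qed.

Lemma Nm0 v e : ~~ inc v e -> Nm v e = 0.
Proof.
rewrite /inc negb_or => /andP [h1 h2].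
by rewrite /Nm eq_sym (negbTE h2) eq_sym (negbTE h1) subrr.
Qed.

Lemma Nm_abs v e : (ends e).1 != (ends e).2 -> inc v e -> `|Nm v e| = 1.
Proof.
rewrite /inc /Nm => hne /orP [] /eqP hv; subst v.
  by rewrite (negbTE hne) eqxx sub0r normrN normr1.
by rewrite eqxx eq_sym (negbTE hne) subr0 normr1.
Qed.

Lemma circ_sum_in (S : {set V}) x : circ x ->
  \sum_e (((ends e).2 \in S)%:R - ((ends e).1 \in S)%:R) * x e = 0.
Proof.
move=> cx.
transitivity (\sum_(v in S) \sum_e Nm v e * x e); last first.
  by rewrite big1 // => v _; exact: cx.
rewrite exchange_big /=; apply: eq_bigr => e _.
by rewrite -sumN_in mulr_suml.
Qed.

Lemma subadj_sym (C : {set E}) : symmetric (subadj ends C).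
Proof.
move=> u w; rewrite /subadj; apply/existsP/existsP => [] [e /andP [he h]];
  by exists e; rewrite he /= orbC.
Qed.

Lemma subadjP (C : {set E}) u w : reflect (exists2 e, e \in C & ends e = (u, w) \/ ends e = (w, u))
  (subadj ends C u w).
Proof.
apply: (iffP existsP) => [[e /andP [he /orP [] /eqP h]]|[e he [] h]].
- by exists e => //; left.
- by exists e => //; right.
- by exists e; rewrite he h eqxx.
- by exists e; rewrite he h eqxx orbT.
Qed.

Lemma connect_subadj_sym (C : {set E}) : connect_sym (subadj ends C).
Proof. exact/sym_connect_sym/subadj_sym. Qed.

Lemma sdeg_sum (C : {set E}) : (\sum_v sdeg ends C v = 2 * #|C|)%N.
Proof.
have H : forall f : E -> V, (\sum_v #|[set e in C | f e == v]| = #|C|)%N.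
  move=> f; rewrite (eq_bigr (fun v => (\sum_(e in C) (f e == v))%N)); last first.
    by move=> v _; rewrite -sum1_card big_mkcond /= [RHS]big_mkcond; apply: eq_bigr => e _; rewrite inE; case: (e \in C).
  rewrite exchange_big /= -sum1_card; apply: eq_bigr => e _.
  by rewrite (bigD1 (f e)) //= eqxx big1 ?addn0 // => v; rewrite eq_sym => /negbTE ->.
by rewrite /sdeg big_split /= !H mul2n addnn.
Qed.

Lemma sdeg_in (C : {set E}) e : e \in C -> (sdeg ends C (ends e).1 != 0)%N /\ (sdeg ends C (ends e).2 != 0)%N.
Proof.
move=> he; rewrite /sdeg; split; rewrite -lt0n.
  apply: ltn_addr; apply/card_gt0P; exists e; by rewrite inE he eqxx.
apply: ltn_addl; apply/card_gt0P; exists e; by rewrite inE he eqxx.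
Qed.

Lemma sdeg_loopfree (C : {set E}) v : loopfree C ->
  sdeg ends C v = #|[set e in C | inc v e]|.
Proof.
move=> lf; rewrite /sdeg.
have -> : [set e in C | inc v e] = [set e in C | (ends e).1 == v] :|: [set e in C | (ends e).2 == v].
  by apply/setP => e; rewrite !inE /inc andb_orr.
rewrite cardsU; suff -> : [set e in C | (ends e).1 == v] :&: [set e in C | (ends e).2 == v] = set0.
  by rewrite cards0 subn0.
apply/setP => e; rewrite !inE; apply/negP => /andP [/andP [he /eqP h1] /andP [_ /eqP h2]].
by have := lf e he; rewrite h1 h2 eqxx.
Qed.

Lemma sdeg0_notinc (C : {set E}) v e : sdeg ends C v = 0%N -> e \in C -> ~~ inc v e.
Proof.
rewrite /sdeg => /eqP; rewrite addn_eq0 !cards_eq0 => /andP [/eqP h1 /eqP h2] he.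
rewrite /inc; apply/negP => /orP [] hv.
  have : e \in [set e in C | (ends e).1 == v] by rewrite inE he hv.
  by rewrite h1 inE.
have : e \in [set e in C | (ends e).2 == v] by rewrite inE he hv.
by rewrite h2 inE.
Qed.

Lemma cyc_loop (C : {set E}) l : is_cycle ends C -> l \in C -> (ends l).1 = (ends l).2 ->
  C = [set l].
Proof.
move=> [nz [deg con]] hl hll.
set v := (ends l).1.
have hA : l \in [set e in C | (ends e).1 == v] by rewrite inE hl eqxx.
have hB : l \in [set e in C | (ends e).2 == v] by rewrite inE hl -hll eqxx.
have hs : sdeg ends C v = 2%N.
  case: (deg v) => // h0; have := (sdeg_in hl).1; by rewrite h0.
have [cA cB] : #|[set e in C | (ends e).1 == v]| = 1%N /\ #|[set e in C | (ends e).2 == v]| = 1%N.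
  move: hs; rewrite /sdeg.
  have : (0 < #|[set e in C | (ends e).1 == v]|)%N by apply/card_gt0P; exists l.
  have : (0 < #|[set e in C | (ends e).2 == v]|)%N by apply/card_gt0P; exists l.
  lia.
have onlyl : forall e, e \in C -> inc v e -> e = l.
  move=> e he /orP [] h.
    have /eqP/cards1P [z hz] := cA; move: hA; rewrite hz inE => /eqP ->.
    by apply/set1P; rewrite -hz inE he h.
  have /eqP/cards1P [z hz] := cB; move: hB; rewrite hz inE => /eqP ->.
  by apply/set1P; rewrite -hz inE he h.
have clos : forall w, connect (subadj ends C) v w -> w = v.
  apply: conn_ind => // a b -> /subadjP [e he [] h].
    have := onlyl e he; rewrite /inc h eqxx => /(_ isT) el.
    rewrite el in h; have hb : b = (ends l).2 by rewrite h.
    by rewrite hb -hll.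
  have := onlyl e he; rewrite /inc h eqxx orbT => /(_ isT) el.
  rewrite el in h; have hb : b = (ends l).1 by rewrite h.
  by rewrite hb.
apply/setP => e; rewrite inE; apply/idP/eqP => [he|->//].
apply: onlyl => //.
have := con v (ends e).1; rewrite hs (sdeg_in he).1 => /(_ isT isT) /clos h.
by rewrite /inc h eqxx.
Qed.

Lemma two_edge (C : {set E}) x v e e' : is_cycle ends C -> loopfree C ->
  (forall f, f \notin C -> x f = 0) -> circ x -> e \in C -> e' \in C ->
  inc v e -> inc v e' -> `|x e| = `|x e'|.
Proof.
move=> [nz [deg con]] lf supp cx he he' ie ie'.
case: (eqVneq e e') => [-> //|ne].
set U := [set f in C | inc v f].
have hU : #|U| = 2%N.
  rewrite -sdeg_loopfree //; case: (deg v) => // h0.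
  by have := sdeg0_notinc h0 he; rewrite ie.
have eU : U = [set e; e'].
  apply/esym/eqP; rewrite eqEcard cards2 ne hU leqnn andbT.
  by apply/subsetP => f; rewrite !inE => /orP [] /eqP ->; rewrite ?he ?ie ?he' ?ie'.
have := cx v.
rewrite (bigID (fun f => f \in U)) /= [X in _ + X]big1 ?addr0; last first.
  move=> f; rewrite inE negb_and => /orP [hf|hf].
    by rewrite supp ?mulr0.
  by rewrite Nm0 ?mul0r.
rewrite eU big_setU1 /= ?big_set1; last by rewrite inE.
move/eqP; rewrite addr_eq0 => /eqP h.
have := congr1 (fun z => `|z|) h; rewrite /= normrN !normrM !Nm_abs ?mul1r //.
  exact: lf.
exact: lf.
Qed.

Lemma cyc_abs (C : {set E}) x : is_cycle ends C ->
  (forall f, f \notin C -> x f = 0) -> circ x ->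
  forall e e', e \in C -> e' \in C -> `|x e| = `|x e'|.
Proof.
move=> cyc supp cx e e' he he'.
case: (boolP [exists l in C, (ends l).1 == (ends l).2]).
  move=> /exists_inP [l hl /eqP hll].
  have eC := cyc_loop cyc hl hll.
  by move: he he'; rewrite eC !inE => /eqP -> /eqP ->.
rewrite negb_exists => /forallP lf'.
have lf : loopfree C by move=> f hf; have := lf' f; rewrite hf.
have [nz [deg con]] := cyc.
pose P w := forall f, f \in C -> inc w f -> `|x f| = `|x e|.
have P0 : P (ends e).1.
  move=> f hf hi; apply: (two_edge cyc lf supp cx hf he hi); by rewrite /inc eqxx.
have clos : forall w, connect (subadj ends C) (ends e).1 w -> P w.
  apply: conn_ind => // a b Pa /subadjP [g hg hgab] f hf hi.
  have ia : inc a g by rewrite /inc; case: hgab => ->; rewrite eqxx ?orbT.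
  have ib : inc b g by rewrite /inc; case: hgab => ->; rewrite eqxx ?orbT.
  by rewrite (two_edge cyc lf supp cx hf hg hi ib) (Pa g hg ia).
have := con (ends e).1 (ends e').1; rewrite (sdeg_in he).1 (sdeg_in he').1 => /(_ isT isT) /clos.
by move=> /(_ e' he'); rewrite /inc eqxx => /(_ isT) ->.
Qed.
Lemma circ_from x v0 : (forall v, v != v0 -> \sum_e Nm v e * x e = 0) -> circ x.
Proof.
move=> h v; case: (eqVneq v v0) => [->|]; last exact: h.
have tot : \sum_v \sum_e Nm v e * x e = 0.
  rewrite exchange_big /= big1 // => e _; by rewrite -mulr_suml Nm_colsum mul0r.
move: tot; rewrite (bigD1 v0) //= [X in _ + X]big1 ?addr0 // => w hw; exact: h.
Qed.

Lemma circ_off (S : {set E}) x v : (forall e, e \notin S -> x e = 0) ->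
  sdeg ends S v = 0%N -> \sum_e Nm v e * x e = 0.
Proof.
move=> supp h0; apply: big1 => e _; case: (boolP (e \in S)) => he.
  by rewrite Nm0 ?mul0r // (sdeg0_notinc h0).
by rewrite supp ?mulr0.
Qed.

Lemma cardK (S : {set E}) : (forall v, sdeg ends S v = 0%N \/ sdeg ends S v = 2%N) ->
  #|[set v | sdeg ends S v != 0%N]| = #|S|.
Proof.
move=> deg; have := sdeg_sum S.
rewrite (bigID (fun v => sdeg ends S v != 0%N)) /= [X in (_ + X)%N]big1; last by move=> v /negPn/eqP.
rewrite addn0 (eq_bigr (fun _ => 2%N)); last first.
  by move=> v; case: (deg v) => ->.
rewrite sum_nat_const mulnC => /eqP; rewrite eqn_pmul2l // => /eqP <-.
by apply: eq_card => v; rewrite inE.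
Qed.

Lemma cyc_dep C : is_cycle ends C -> col_dependent Nm C.
Proof.
move=> [nz [deg con]].
set K := [set v | sdeg ends C v != 0%N].
have cK : #|K| = #|C| by apply: cardK.
have [e0 he0] : exists e0, e0 \in C by apply/set0Pn.
set v0 := (ends e0).1.
have hv0 : v0 \in K by rewrite inE (sdeg_in he0).1.
have lt : (#|K :\ v0| < #|C|)%N by move: (cardsD1 v0 K); rewrite hv0 cK; lia.
have [x [supp [nzx cx]]] := DL1set Nm lt.
exists x; split => //; split => //.
apply: (@circ_from x v0) => v hv.
case: (boolP (v \in K)) => hK.
  by apply: cx; rewrite in_setD1 hv hK.
apply: (circ_off supp); by move: hK; rewrite inE negbK => /eqP.
Qed.

Lemma cyc_circuit C : is_cycle ends C -> col_circuit Nm C.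
Proof.
move=> cyc; split; first exact: cyc_dep.
move=> T /properP [sTC [e heC heT]] [x [supp [[l0 hl0] cx]]].
have hl0T : l0 \in T by apply: contraR hl0 => h; rewrite supp.
have hl0C : l0 \in C by apply: (subsetP sTC).
have suppC : forall f, f \notin C -> x f = 0.
  move=> f hf; apply: supp; apply: contra hf; exact: (subsetP sTC).
have := cyc_abs cyc suppC cx heC hl0C.
by rewrite supp // normr0 => /esym/eqP; rewrite normr_eq0 (negbTE hl0).
Qed.
Lemma set1_sep (l : E) (f : pred E) : [set e in [set l] | f e] = if f l then [set l] else set0.
Proof.
apply/setP => e; rewrite !inE; case: (eqVneq e l) => [->|ne]; case hf: (f l);
  by rewrite ?inE ?eqxx ?hf ?(negbTE ne) ?andbF.
Qed.

Lemma circuit_cycle S : col_circuit Nm S -> is_cycle ends S.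
Proof.
move=> [[x [supp [[l0 hl0] cx]]] mini].
have hl0S : l0 \in S by apply: contraR hl0 => h; rewrite supp.
have suppS : forall e, e \in S -> x e != 0.
  move=> e he; apply/negP => /eqP xe0; apply: (mini (S :\ e)).
    by rewrite properD1.
  exists x; split; last by split; [exists l0|].
  move=> f; rewrite in_setD1 negb_and negbK => /orP [/eqP ->|]; [exact: xe0|exact: supp].
case: (boolP [exists l in S, (ends l).1 == (ends l).2]).
  move=> /exists_inP [l hl /eqP hll].
  have eS : S = [set l].
    apply/eqP; apply/negPn/negP => hne.
    apply: (mini [set l]).
      by rewrite properEneq sub1set hl andbT eq_sym.
    exists (fun e => (e == l)%:R); split.
      by move=> f; rewrite inE => /negbTE ->.
    split; first by exists l; rewrite eqxx oner_neq0.
    move=> v; apply: big1 => e _; case: eqP => [->|]; last by rewrite mulr0.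
    by rewrite /Nm hll subrr mul0r.
  subst S.
  have sd : forall v, sdeg ends [set l] v = if (ends l).1 == v then 2%N else 0%N.
    by move=> v; rewrite /sdeg !set1_sep -hll; case: ifP; rewrite ?cards1 ?cards0.
  split; first by apply/set0Pn; exists l; rewrite inE.
  split.
    by move=> v; rewrite sd; case: ifP; auto.
  move=> u w; rewrite !sd; do 2 case: ifP => // /eqP <-.
  by move=> *; exact: connect0.
rewrite negb_exists => /forallP lf'.
have lf : loopfree S by move=> f hf; have := lf' f; rewrite hf.
set K := [set v | sdeg ends S v != 0%N].
have deg2 : forall v, v \in K -> (2 <= sdeg ends S v)%N.
  move=> v; rewrite inE sdeg_loopfree // => hK.
  rewrite ltnNge; apply/negP => h1.
  have : #|[set e in S | inc v e]| == 1%N by move: hK h1; case: #|_| => [|[|]].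
  move=> /cards1P [e hU].
  have : e \in [set e in S | inc v e] by rewrite hU set11.
  rewrite inE => /andP [he ie].
  have := cx v; rewrite (bigD1 e) //= [X in _ + X]big1 ?addr0.
    move/eqP; rewrite mulf_eq0 (negbTE (suppS e he)) orbF -normr_eq0 Nm_abs ?oner_eq0 //.
    exact: lf.
  move=> f hf; case: (boolP (f \in S)) => fS; last by rewrite supp ?mulr0.
  rewrite Nm0 ?mul0r //; apply: contra hf => ifv.
  have : f \in [set e in S | inc v e] by rewrite inE fS ifv.
  by rewrite hU inE.
set v0 := (ends l0).1.
have hv0 : v0 \in K by rewrite inE (sdeg_in hl0S).1.
have leSK : (#|S| <= #|K|)%N.
  rewrite leqNgt; apply/negP => lt.
  pose M (o : option V) (e : E) : R := if o is Some v then Nm v e else (e == l0)%:R.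
  pose Is := None |: (Some @: (K :\ v0)).
  have cI : #|Is| = #|K|.
    rewrite cardsU1 card_imset; last exact: Some_inj.
    have -> : None \notin Some @: (K :\ v0) by apply/imsetP => [[v _]].
    by rewrite (cardsD1 v0 K) hv0.
  have lt' : (#|Is| < #|S|)%N by rewrite cI.
  have [y [sy [nzy cy]]] := @DL1set R _ _ M Is S lt'.
  apply: (mini (S :\ l0)); first by rewrite properD1.
  exists y; split.
    move=> f; rewrite in_setD1 negb_and negbK => /orP [/eqP ->|]; last exact: sy.
    by have := cy None; rewrite setU11 /M sum_delta => /(_ isT).
  split => //; apply: (@circ_from y v0) => v hv.
  case: (boolP (v \in K)) => hK.
    apply: (cy (Some v)); rewrite in_setU1 /=; apply/imsetP; exists v => //.
    by rewrite in_setD1 hv hK.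
  by apply: (circ_off sy); move: hK; rewrite inE negbK => /eqP.
split; first by apply/set0Pn; exists l0.
split.
  move=> v; case: (boolP (v \in K)) => hK; last first.
    by left; move: hK; rewrite inE negbK => /eqP.
  right; apply/eqP; rewrite eqn_leq deg2 // andbT.
  have sumK : (\sum_(w in K) sdeg ends S w = 2 * #|S|)%N.
    rewrite -sdeg_sum [RHS](bigID (mem K)) /= [X in (_ + X)%N]big1 ?addn0 //.
    by move=> w; rewrite inE negbK => /eqP.
  rewrite (bigD1 v hK) /= in sumK.
  have hrest : (2 * #|K :\ v| <= \sum_(w in K | w != v) sdeg ends S w)%N.
    rewrite mulnC -sum_nat_const.
    apply: (@leq_trans (\sum_(w in K :\ v) sdeg ends S w)).
      by apply: leq_sum => w; rewrite in_setD1 => /andP [_ hw]; exact: deg2.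
    by apply: eq_leq; apply: eq_bigl => w; rewrite in_setD1 andbC.
  move: (cardsD1 v K); rewrite hK => cK.
  rewrite leqNgt; apply/negP => h3.
  move: sumK; set X := (\sum_(i | _) _)%N => sumK.
  have hr : (2 * #|K :\ v| <= X)%N := hrest.
  move: cK => /= cK; lia.
move=> u w hu hw; apply/negPn/negP => nc.
set Cu := [set z | connect (subadj ends S) u z].
have clos : forall e, e \in S -> ((ends e).1 \in Cu) = ((ends e).2 \in Cu).
  move=> e he; rewrite !inE.
  have adj : subadj ends S (ends e).1 (ends e).2.
    by apply/subadjP; exists e => //; left; case: (ends e).
  apply/idP/idP => h; first exact: connect_trans h (connect1 adj).
  by apply: connect_trans h (connect1 _); rewrite subadj_sym.
have [eu heu iu] : exists2 eu, eu \in S & inc u eu.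
  move: hu; rewrite sdeg_loopfree // -lt0n => /card_gt0P [eu].
  by rewrite inE => /andP [h1 h2]; exists eu.
have [ew hew iw] : exists2 ew, ew \in S & inc w ew.
  move: hw; rewrite sdeg_loopfree // -lt0n => /card_gt0P [ew].
  by rewrite inE => /andP [h1 h2]; exists ew.
have uCu : u \in Cu by rewrite inE connect0.
have tu : (ends eu).1 \in Cu.
  by move: iu => /orP [] /eqP h; [rewrite h|rewrite clos // h].
have tw : (ends ew).1 \notin Cu.
  apply/negP => h; apply: (negP nc).
  move: iw => /orP [] /eqP hh.
    by move: h; rewrite hh inE.
  by move: h; rewrite clos // hh inE.
pose y e := if (ends e).1 \in Cu then x e else 0.
apply: (mini (S :\ ew)); first by rewrite properD1.
exists y; split.
  move=> f; rewrite in_setD1 negb_and negbK => /orP [/eqP ->|hf].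
    by rewrite /y (negbTE tw).
  by rewrite /y supp //; case: ifP.
split; first by exists eu; rewrite /y tu suppS.
move=> v; case: (boolP (v \in Cu)) => hv.
  rewrite -[RHS](cx v); apply: eq_bigr => e _; rewrite /y; case: ifP => // ht.
  case: (boolP (e \in S)) => he; last by rewrite supp.
  rewrite Nm0 ?mul0r ?mulr0 //; apply/negP => /orP [] /eqP hvv.
    by move: ht; rewrite hvv hv.
  by move: ht; rewrite clos // hvv hv.
apply: big1 => e _; rewrite /y; case: ifP => ht; last by rewrite mulr0.
case: (boolP (e \in S)) => he; last by rewrite supp ?mulr0.
rewrite Nm0 ?mul0r //; apply/negP => /orP [] /eqP hvv.
  by move: ht; rewrite hvv (negbTE hv).
by move: ht; rewrite clos // hvv (negbTE hv).
Qed.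
Definition indep (B : {set E}) := ~ col_dependent Nm B.

Lemma exists_basis : exists B : {set E}, indep B /\
  forall c, c \notin B -> col_dependent Nm (c |: B).
Proof.
have i0 : indep set0.
  by move=> [x [supp [[l hl] _]]]; move: hl; rewrite supp ?inE ?eqxx.
suff H : forall k (B : {set E}), (#|~: B| <= k)%N -> indep B -> exists B' : {set E}, indep B' /\
  forall c, c \notin B' -> col_dependent Nm (c |: B').
  exact: (H _ set0 (leqnn _) i0).
elim=> [|k IH] B hk iB.
  exists B; split => // c hc; exfalso.
  move: hk; rewrite leqn0 cards_eq0 => /eqP h.
  have : c \in ~: B by rewrite inE hc.
  by rewrite h inE.
case: (pselect (exists c, c \notin B /\ indep (c |: B))) => [[c [hc ic]]|hno].
  apply: (IH (c |: B)) => //.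
  move: hk; rewrite setCU (cardsD1 c (~: B)) inE hc /=.
  have -> : ~: [set c] :&: ~: B = ~: B :\ c by apply/setP => z; rewrite !inE andbC.
  by [].
exists B; split => // c hc; apply: contrapT => hd; apply: hno; by exists c.
Qed.

Definition Roots := [set v | roots (gadj ends) v].

Lemma gadj_sym : connect_sym (gadj ends).
Proof. exact: connect_subadj_sym. Qed.

Lemma root_ends e : fingraph.root (gadj ends) (ends e).1 = fingraph.root (gadj ends) (ends e).2.
Proof.
apply/(fingraph.rootP gadj_sym); apply: connect1; apply/subadjP; exists e; first by rewrite inE.
by left; case: (ends e).
Qed.

Lemma cons_sum_in (S : {set V}) x : \sum_(v in S) \sum_e Nm v e * x e =
  \sum_e ((((ends e).2 \in S)%:R - ((ends e).1 \in S)%:R) * x e).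
Proof.
rewrite exchange_big /=; apply: eq_bigr => e _.
by rewrite -sumN_in mulr_suml.
Qed.

Lemma indep_ub B : indep B -> (#|B| + #|Roots| <= #|V|)%N.
Proof.
move=> iB; rewrite leqNgt; apply/negP => lt.
have lt' : (#|~: Roots| < #|B|)%N by move: (cardsC Roots); lia.
have [x [supp [nzx cx]]] := DL1set Nm lt'.
apply: iB; exists x; split => //; split => //.
move=> r; case: (boolP (r \in Roots)) => hr; last by apply: cx; rewrite inE.
set Cr := [set v | fingraph.root (gadj ends) v == r].
have hsum : \sum_(v in Cr) \sum_e Nm v e * x e = 0.
  by rewrite cons_sum_in big1 // => e _; rewrite !inE root_ends subrr mul0r.
move: hsum.
have hrC : r \in Cr by move: hr; rewrite !inE.
rewrite (bigD1 r hrC) /= [X in _ + X]big1 ?addr0 //.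
move=> v /andP [hv hvr]; have hv' : v \in Cr := hv.
apply: cx; rewrite !inE; apply/negP => rv.
by move: hv' hvr; rewrite /Cr inE (eqP rv) => /eqP ->; rewrite eqxx.
Qed.

Lemma basis_lb B : indep B -> (forall c, c \notin B -> col_dependent Nm (c |: B)) ->
  (#|V| <= #|B| + #|Roots|)%N.
Proof.
move=> iB mB; rewrite leqNgt; apply/negP => lt.
pose M (o : E + V) (v : V) : R := if o is inl b then Nm v b else (v == (if o is inr r then r else v))%:R.
pose Is : {set E + V} := ((@inl E V) @: B) :|: ((@inr E V) @: Roots).
have cI : (#|Is| < #|[set: V]|)%N.
  rewrite cardsT; apply: leq_ltn_trans lt; rewrite /Is cardsU !card_imset; last first.
  - by move=> a b [].
  - by move=> a b [].
  exact: leq_subr.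
have [y [_ [[v0 hv0] cy]]] := DL1set M cI.
have yB : forall b, b \in B -> \sum_v y v * Nm v b = 0.
  move=> b hb; have Hb : inl b \in Is by rewrite /Is in_setU; apply/orP; left; apply/imsetP; exists b.
  have h := cy (inl b) Hb; rewrite -[RHS]h; apply: eq_bigr => v _; by rewrite mulrC.
have yR : forall r, r \in Roots -> y r = 0.
  move=> r hr; have Hr : inr r \in Is by rewrite /Is in_setU; apply/orP; right; apply/imsetP; exists r.
  by have := cy (inr r) Hr; rewrite /M sum_delta.
have yE : forall e, \sum_v y v * Nm v e = 0.
  move=> c; case: (boolP (c \in B)) => hc; first exact: yB.
  have [z [sz [[l hl] cz]]] := mB c hc.
  have zc : z c != 0.
    apply/negP => /eqP zc0; apply: iB; exists z; split; last by split; [exists l|].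
    move=> f hf; case: (eqVneq f c) => [->//|ne]; apply: sz; by rewrite in_setU1 negb_or ne hf.
  have : \sum_v y v * \sum_e Nm v e * z e = 0 by rewrite big1 // => v _; rewrite cz mulr0.
  under eq_bigr => v _ do rewrite mulr_sumr.
  rewrite exchange_big /= (bigD1 c) //= [X in _ + X]big1 ?addr0.
    under eq_bigr => v _ do rewrite mulrA.
    rewrite -mulr_suml => /eqP; rewrite mulf_eq0 (negbTE zc) orbF => /eqP //.
  move=> e he; case: (boolP (e \in B)) => heB.
    under eq_bigr => v _ do rewrite mulrA.
    by rewrite -mulr_suml yB // mul0r.
  rewrite sz ?big1 // ?in_setU1 ?negb_or ?he // => v _; by rewrite !mulr0.
have cst : forall e, y (ends e).1 = y (ends e).2.
  by move=> e; apply/eqP; rewrite eq_sym -subr_eq0 -yN yE.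
have yroot : forall v, y v = y (fingraph.root (gadj ends) v).
  move=> v; apply: (@conn_ind _ _ (fun w => y v = y w) v) => //; last exact: connect_root.
  move=> a b -> /subadjP [e _ [] h]; by have := cst e; rewrite h.
have hr0 : fingraph.root (gadj ends) v0 \in Roots.
  rewrite inE; exact: (fingraph.roots_root gadj_sym v0).
by move: hv0; rewrite yroot yR // eqxx.
Qed.

Lemma basis_card B : indep B -> (forall c, c \notin B -> col_dependent Nm (c |: B)) ->
  #|B| = graph_rank ends.
Proof.
move=> iB mB; have h1 := indep_ub iB; have h2 := basis_lb iB mB.
rewrite /graph_rank.
have -> : n_comp (gadj ends) predT = #|Roots|.
  by apply: eq_card => v; rewrite !inE andbT.
lia.
Qed.
Lemma indep_zero B h : indep B -> (forall e, e \notin B -> h e = 0) -> circ h ->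
  forall e, h e = 0.
Proof.
move=> iB sh ch e; apply/eqP; apply: contraT => ne; exfalso.
by apply: iB; exists h; split => //; split => //; exists e.
Qed.

Lemma chord_nz B c z : indep B -> (forall e, e \notin c |: B -> z e = 0) ->
  (exists l, z l != 0) -> circ z -> z c != 0.
Proof.
move=> iB sz nz cz; apply/negP => /eqP zc0; apply: iB; exists z; split => //.
move=> f hf; case: (eqVneq f c) => [->//|ne]; apply: sz; by rewrite in_setU1 negb_or ne hf.
Qed.

Lemma circ_lin (I : finType) (P : pred I) (w : I -> R) (g : I -> E -> R) :
  (forall i, P i -> circ (g i)) -> circ (fun e => \sum_(i | P i) w i * g i e).
Proof.
move=> cg v; under eq_bigr => e _ do rewrite mulr_sumr.
rewrite exchange_big /= big1 // => i Pi.
under eq_bigr => e _ do rewrite mulrCA.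
by rewrite -mulr_sumr cg // mulr0.
Qed.

Lemma circ_sub x y : circ x -> circ y -> circ (fun e => x e - y e).
Proof.
move=> cx cy v; under eq_bigr => e _ do rewrite mulrBr.
by rewrite sumrB cx cy subr0.
Qed.

Lemma circ_ext x y : (forall e, x e = y e) -> circ x -> circ y.
Proof. by move=> h cx v; rewrite -[RHS](cx v); apply: eq_bigr => e _; rewrite h. Qed.

Lemma fund B c : indep B -> (forall c, c \notin B -> col_dependent Nm (c |: B)) ->
  c \notin B -> exists f : E -> R, circ f /\ f c = 1 /\ (forall e, e \notin c |: B -> f e = 0).
Proof.
move=> iB mB hc; have [z [sz [nz cz]]] := mB c hc.
have zc := chord_nz iB sz nz cz.
exists (fun e => z e / z c); split; last split.
- move=> v; under eq_bigr => e _ do rewrite mulrA.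
  by rewrite -mulr_suml cz mul0r.
- by rewrite divff.
- by move=> e he; rewrite sz ?mul0r.
Qed.

Lemma fund_vals B c f : indep B -> c \notin B -> circ f -> f c = 1 ->
  (forall e, e \notin c |: B -> f e = 0) -> forall e, f e = 0 \/ f e = 1 \/ f e = -1.
Proof.
move=> iB hc cf fc sf.
set T := [set e | f e != 0].
have circT : col_circuit Nm T.
  split.
    exists f; split; first by move=> e; rewrite inE negbK => /eqP.
    by split => //; exists c; rewrite fc oner_neq0.
  move=> U /properP [sUT [e heT heU]] [g [sg [nzg cg]]].
  have sg' : forall e, e \notin c |: B -> g e = 0.
    move=> e' he'; apply: sg; apply: contra he' => hU.
    have : e' \in T by apply: (subsetP sUT).
    by rewrite inE; apply: contraR => h; rewrite sf.
  have gc := chord_nz iB sg' nzg cg.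
  pose h e := f e - g e / g c.
  have ch : circ h.
    apply: circ_sub => // v; under eq_bigr => e' _ do rewrite mulrA.
    by rewrite -mulr_suml cg mul0r.
  have h0 : forall e, h e = 0.
    apply: (indep_zero iB) => // e' he'.
    case: (eqVneq e' c) => [->|ne]; first by rewrite /h fc divff ?subrr.
    have hn : e' \notin c |: B by rewrite in_setU1 negb_or ne he'.
    by rewrite /h sf // sg' // mul0r subrr.
  have := h0 e; rewrite /h sg // mul0r subr0 => /eqP.
  by move: heT; rewrite inE => /negbTE ->.
have cyc := circuit_cycle circT.
have hcT : c \in T by rewrite inE fc oner_neq0.
move=> e; case: (boolP (e \in T)) => heT; last by left; move: heT; rewrite inE negbK => /eqP.
right.
have sT : forall e, e \notin T -> f e = 0 by move=> e'; rewrite inE negbK => /eqP.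
have := cyc_abs cyc sT cf heT hcT; rewrite fc normr1 => /eqP.
by rewrite eqr_norml ler01 andbT => /orP [] /eqP; auto.
Qed.
Section Ker.
Variables (B : {set E}) (phi : E -> E -> R) (k : nat) (b : 'I_k -> E).
Hypothesis iB : indep B.
Hypothesis hphi : forall c, c \notin B -> circ (phi c) /\ phi c c = 1 /\
  (forall e, e \notin c |: B -> phi c e = 0).
Hypothesis hb : forall i, b i \in B.
Hypothesis hbs : forall e, e \in B -> exists i, b i = e.
Hypothesis binj : injective b.

Definition AE i e := if e \in B then (e == b i)%:R else - phi e (b i).

Lemma chord_sum x c' : c' \notin B -> \sum_(c | c \notin B) x c * phi c c' = x c'.
Proof.
move=> hc'; rewrite (bigD1 c') //= (hphi hc').2.1 mulr1 big1 ?addr0 // => c /andP [hc ne].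
have := (hphi hc).2.2 c'; rewrite in_setU1 negb_or eq_sym ne hc' => /(_ isT) ->.
by rewrite mulr0.
Qed.

Lemma AE_sum i x : \sum_e AE i e * x e = x (b i) - \sum_(c | c \notin B) x c * phi c (b i).
Proof.
rewrite (bigID (fun e => e \in B)) /=; congr (_ + _).
  rewrite (bigD1 (b i)) ?hb //= /AE hb eqxx mul1r big1 ?addr0 // => e /andP [he ne].
  by rewrite he (negbTE ne) mul0r.
rewrite -sumrN; apply: eq_bigr => e he; by rewrite /AE (negbTE he) mulNr mulrC.
Qed.

Lemma kerE x : (forall i, \sum_e AE i e * x e = 0) <-> circ x.
Proof.
split => [h|cx].
  pose y e := \sum_(c | c \notin B) x c * phi c e.
  have cy : circ y by apply: circ_lin => c hc; exact: (hphi hc).1.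
  apply: (@circ_ext y) => // e; rewrite /y.
  case: (boolP (e \in B)) => he; last by rewrite chord_sum.
  have [i <-] := hbs he.
  by have /eqP := h i; rewrite AE_sum subr_eq0 => /eqP ->.
move=> i; rewrite AE_sum.
pose y e := x e - \sum_(c | c \notin B) x c * phi c e.
have cy : circ y.
  apply: circ_sub => //; apply: circ_lin => c hc; exact: (hphi hc).1.
have := indep_zero iB _ cy (b i); apply.
by move=> e he; rewrite /y chord_sum // subrr.
Qed.

Lemma AE_dep S : col_dependent AE S <-> col_dependent Nm S.
Proof.
split => [[x [s [n c]]]|[x [s [n c]]]]; exists x; do 2 split => //.
  by apply/kerE.
by apply/kerE.
Qed.

Lemma AE_represents : represents_cycle_matroid ends AE.
Proof.
move=> S.
have circ_eq : col_circuit AE S <-> col_circuit Nm S.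
  split => [[d m]|[d m]]; split; first (by apply/AE_dep); last first.
  - by move=> T hT /AE_dep; apply: m.
  - by apply/AE_dep.
  - by move=> T hT /AE_dep; apply: m.
rewrite circ_eq; split; [exact: circuit_cycle|exact: cyc_circuit].
Qed.

Lemma AE_vals i e : AE i e = 0 \/ AE i e = 1 \/ AE i e = -1.
Proof.
rewrite /AE; case: ifP => he; first by case: eqP; auto.
have [cf [fc sf]] := hphi (negbT he).
case: (fund_vals iB (negbT he) cf fc sf (b i)) => [->|[->|->]].
- by left; rewrite oppr0.
- by right; right.
- by right; left; rewrite opprK.
Qed.
End Ker.
Lemma span_path (X : {set E}) u w : connect (subadj ends X) u w ->
  exists z : E -> R, (forall e, e \notin X -> z e = 0) /\
    forall v, \sum_e Nm v e * z e = (v == w)%:R - (v == u)%:R.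
Proof.
apply: (@conn_ind _ _ (fun w => exists z : E -> R, (forall e, e \notin X -> z e = 0) /\
    forall v, \sum_e Nm v e * z e = (v == w)%:R - (v == u)%:R)).
  exists (fun _ => 0); split => // v; rewrite subrr; apply: big1 => e _; by rewrite mulr0.
move=> a b' [z [sz hz]] /subadjP [e he hab].
have dl : forall v, \sum_f Nm v f * (f == e)%:R = Nm v e.
  by move=> v; rewrite -(sum_delta e (Nm v)); apply: eq_bigr => f _; rewrite mulrC.
case: hab => h.
  exists (fun f => z f + (f == e)%:R); split.
    move=> f hf; rewrite sz //; case: eqP => [ef|]; last by rewrite addr0.
    by move: hf; rewrite ef he.
  move=> v; under eq_bigr => f _ do rewrite mulrDr.
  by rewrite big_split /= hz dl /Nm h /=; ring.
exists (fun f => z f - (f == e)%:R); split.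
  move=> f hf; rewrite sz //; case: eqP => [ef|]; last by rewrite subr0.
  by move: hf; rewrite ef he.
move=> v; under eq_bigr => f _ do rewrite mulrBr.
by rewrite sumrB hz dl /Nm h /=; ring.
Qed.

Section Sep.
Variable (B : {set E}).
Hypothesis iB : indep B.

Definition Tset e := [set v | connect (subadj ends (B :\ e)) (ends e).1 v].

Lemma T_sep e : e \in B -> (ends e).2 \notin Tset e.
Proof.
move=> he; rewrite inE; apply/negP => /span_path [z [sz hz]].
apply: iB; exists (fun f => (f == e)%:R - z f); split; last split.
- move=> f hf; have ne : f != e by apply: contra hf => /eqP ->.
  have hn : f \notin B :\ e by rewrite in_setD1 (negbTE hf) andbF.
  by rewrite (negbTE ne) sz // subrr.
- have hn : e \notin B :\ e by rewrite in_setD1 eqxx.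
  by exists e; rewrite eqxx sz // subr0 oner_neq0.
- move=> v; under eq_bigr => f _ do rewrite mulrBr.
  rewrite sumrB hz.
  have -> : \sum_f Nm v f * (f == e)%:R = Nm v e.
    by rewrite -(sum_delta e (Nm v)); apply: eq_bigr => f _; rewrite mulrC.
  by rewrite /Nm subrr.
Qed.

Lemma T_cl e b' : b' \in B -> b' != e -> ((ends b').1 \in Tset e) = ((ends b').2 \in Tset e).
Proof.
move=> hb ne; rewrite !inE.
have adj : subadj ends (B :\ e) (ends b').1 (ends b').2.
  by apply/subadjP; exists b'; [rewrite in_setD1 ne hb|left; case: (ends b')].
apply/idP/idP => h; first exact: connect_trans h (connect1 adj).
by apply: connect_trans h (connect1 _); rewrite subadj_sym.
Qed.

Definition Sp (p : {set E}) := [set v | odd #|[set f in p :&: B | v \in Tset f]|].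
Definition sig (p : {set E}) e : R := (((ends e).2 \in Sp p)%:R - ((ends e).1 \in Sp p)%:R).

Lemma sig_off (p : {set E}) e : e \in B -> e \notin p -> sig p e = 0.
Proof.
move=> he hp; rewrite /sig.
suff eq : [set f in p :&: B | (ends e).2 \in Tset f] = [set f in p :&: B | (ends e).1 \in Tset f].
  by rewrite /Sp !in_set eq subrr.
apply/setP => f; rewrite !inE; case: (boolP (f \in p)) => //= fp; case: (boolP (f \in B)) => //= fB.
have ne : e != f by apply: contra hp => /eqP ->.
by have := T_cl he ne; rewrite !inE => ->.
Qed.

Lemma sig_on (p : {set E}) e : e \in B -> e \in p -> sig p e != 0.
Proof.
move=> he hp; rewrite /sig /Sp !in_set.
have eq1 : [set f in p :&: B | (ends e).1 \in Tset f] = e |: [set f in p :&: B | (ends e).2 \in Tset f].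
  apply/setP => f; rewrite !inE; case: (eqVneq f e) => [->|ne] /=.
    by rewrite hp he connect0.
  case: (boolP (f \in p)) => //= fp; case: (boolP (f \in B)) => //= fB.
  have ne' : e != f by rewrite eq_sym.
  by have := T_cl he ne'; rewrite !inE => ->.
have nin : e \notin [set f in p :&: B | (ends e).2 \in Tset f].
  by rewrite inE negb_and; have := T_sep he; rewrite !inE => ->; rewrite orbT.
rewrite eq1 cardsU1 nin /= add0n.
by case: (odd _); rewrite /= ?subr0 ?sub0r ?oppr_eq0 oner_neq0.
Qed.

Definition Drow (p : {set E}) e : R := if e \in B then 0 else if e \in p then (sig p e == 0)%:R else sig p e.
Definition kap (p : {set E}) e : R := if e \in B then sig p e else sig p e - (sig p e == 0)%:R.

Lemma sig_vals (p : {set E}) e : sig p e = 0 \/ sig p e = 1 \/ sig p e = -1.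
Proof.
rewrite /sig; case: (_ \in _); case: (_ \in _); rewrite ?subrr ?subr0 ?sub0r; auto.
Qed.

Lemma Drow_vals (p : {set E}) e : Drow p e = 0 \/ Drow p e = 1 \/ Drow p e = -1.
Proof.
rewrite /Drow; case: ifP => _; first by left.
case: ifP => _; last exact: sig_vals.
by case: eqP; auto.
Qed.

Lemma kap_nz (p : {set E}) e : e \in p -> kap p e != 0.
Proof.
move=> hp; rewrite /kap; case: ifP => he; first exact: sig_on.
case: (sig_vals p e) => [->|[->|->]].
- by rewrite eqxx sub0r oppr_eq0 oner_neq0.
- by rewrite oner_eq0 subr0 oner_neq0.
- by rewrite oppr_eq0 oner_eq0 subr0 oppr_eq0 oner_neq0.
Qed.

Lemma rowrel (p : {set E}) x : circ x -> \sum_e Drow p e * x e + \sum_(e in p) kap p e * x e = 0.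
Proof.
move=> cx; rewrite -[RHS](circ_sum_in (Sp p) cx) [X in _ + X]big_mkcond /= -big_split /=.
apply: eq_bigr => e _; rewrite -/(sig p e).
case: (boolP (e \in p)) => hp; last first.
  rewrite addr0 /Drow; case: ifP => he; last by rewrite (negbTE hp).
  by rewrite sig_off ?mul0r.
rewrite -mulrDl; congr (_ * _); rewrite /Drow /kap; case: ifP => he.
  by rewrite add0r.
by rewrite hp addrC subrK.
Qed.
End Sep.
Lemma main (P : {set {set E}}) (HP : forall p, p \in P -> #|p| = 2%N) :
  exists r : nat, (r <= #|P|)%N /\
  exists (A : 'I_(graph_rank ends) + 'I_r -> E + 'I_r -> R)
         (b : 'I_(graph_rank ends) -> E),
    injective b /\
        (forall i j, A (inl j) (inl (b i)) = (i == j)%:R) /\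
        (forall j i, A (inr j) (inl (b i)) = 0) /\
        (forall i k, A (inl i) (inr k) = 0) /\
        (forall j k, A (inr j) (inr k) = (j == k)%:R) /\
        (forall rw cl, A rw cl = 0 \/ A rw cl = 1 \/ A rw cl = -1) /\
        represents_cycle_matroid ends (fun i e => A (inl i) (inl e)) /\
        forall e1 e2, e1 != e2 -> [set e1; e2] \in P ->
          exists (g : E + 'I_r) (alpha beta : R),
            alpha != 0 /\ beta != 0 /\
            forall x : E + 'I_r -> R, in_kernel A x ->
              x g = alpha * x (inl e1) + beta * x (inl e2).
Proof.
have [B [iB mB]] := exists_basis.
have hB := basis_card iB mB.
have [phi hphi] : exists phi : E -> E -> R, forall c, c \notin B -> circ (phi c) /\
    phi c c = 1 /\ (forall e, e \notin c |: B -> phi c e = 0).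
  have H : forall c, exists f : E -> R, c \notin B -> (circ f /\ f c = 1 /\
      (forall e, e \notin c |: B -> f e = 0)).
    move=> c; case: (boolP (c \in B)) => hc; first by exists (fun _ => 0).
    by have [f hf] := fund iB mB hc; exists f.
  have [phi hp] := boolp.choice H; by exists phi.
pose b (i : 'I_(graph_rank ends)) : E := enum_val (cast_ord (esym hB) i).
have hb : forall i, b i \in B by move=> i; exact: enum_valP.
have binj : injective b.
  by move=> i1 i2 /enum_val_inj /(congr1 val) /= h; apply: val_inj.
have hbs : forall e, e \in B -> exists i, b i = e.
  move=> e he; exists (cast_ord hB (enum_rank_in he e)).
  by rewrite /b cast_ordK enum_rankK_in.
exists #|P|; split => //.
pose A (rw : 'I_(graph_rank ends) + 'I_#|P|) (cl : E + 'I_#|P|) : R :=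
  match rw, cl with
  | inl i, inl e => AE B phi b i e
  | inl _, inr _ => 0
  | inr j, inl e => Drow B (enum_val j) e
  | inr j, inr k => (j == k)%:R
  end.
exists A, b; split => //; split.
  by move=> i j; rewrite /A /AE hb (inj_eq binj).
split; first by move=> j i; rewrite /A /Drow hb.
split => //; split => //; split.
  case=> [i|j] [e|k] /=.
  - exact: AE_vals.
  - by left.
  - exact: Drow_vals.
  - by case: eqP; auto.
split; first exact: (AE_represents iB hphi hb hbs).
move=> e1 e2 ne hp.
set p := [set e1; e2] in hp *.
set j := enum_rank_in hp p.
have ej : enum_val j = p by rewrite /j enum_rankK_in.
have h1 : e1 \in p by rewrite !inE eqxx.
have h2 : e2 \in p by rewrite !inE eqxx orbT.
exists (inr j), (kap B p e1), (kap B p e2); split; first exact: kap_nz.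
split; first exact: kap_nz.
move=> x kx.
have cx : circ (fun e => x (inl e)).
  apply/(kerE iB hphi hb hbs) => i; have := kx (inl i).
  rewrite big_sumType /= [X in _ + X]big1; last by move=> k _; rewrite /A mul0r.
  by rewrite addr0 => h; exact: h.
have rj := kx (inr j); rewrite big_sumType /= in rj.
have s2 : \sum_(i < #|P|) (j == i)%:R * x (inr i) = x (inr j).
  rewrite (bigD1 j) //= eqxx mul1r big1 ?addr0 // => k nk.
  by rewrite eq_sym (negbTE nk) mul0r.
rewrite s2 ej in rj.
have h := @rowrel B p _ cx.
have nin : e1 \notin [set e2] by rewrite inE.
rewrite /p (big_setU1 _ nin) big_set1 /= in h.
apply: (addrI (\sum_e Drow B p e * x (inl e))).
by rewrite rj h.
Qed.
End G.

Unset Implicit Arguments.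
Theorem theorem3p1 (R : realType) (V E : finType) (ends : E -> V * V)
  (P : {set {set E}}) (HP : forall p, p \in P -> #|p| = 2%N) :
  exists r : nat, (r <= #|P|)%N /\
  exists (A : 'I_(graph_rank ends) + 'I_r -> E + 'I_r -> R)
         (b : 'I_(graph_rank ends) -> E),
    (* (i) block form: rows (I_rk-part, I_r-part); columns inl (b i) form
       the identity block, the columns inr k (labels in F) the middle block,
       the remaining E-columns form (C over D) *)
    injective b /\
        (forall i j, A (inl j) (inl (b i)) = (i == j)%:R) /\
        (forall j i, A (inr j) (inl (b i)) = 0) /\
        (forall i k, A (inl i) (inr k) = 0) /\
        (forall j k, A (inr j) (inr k) = (j == k)%:R) /\
        (forall rw cl, A rw cl = 0 \/ A rw cl = 1 \/ A rw cl = -1) /\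
    (* (ii) (I | C), columns labelled by E, represents the cycle matroid *)
        represents_cycle_matroid ends (fun i e => A (inl i) (inl e)) /\
    (* (iii) *)
        forall e1 e2, e1 != e2 -> [set e1; e2] \in P ->
          exists (g : E + 'I_r) (alpha beta : R),
            alpha != 0 /\ beta != 0 /\
            forall x : E + 'I_r -> R, in_kernel A x ->
              x g = alpha * x (inl e1) + beta * x (inl e2).
Proof. exact: main. Qed.
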